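(* The category $\mathcal O$ is a full subcategory of the category $\mathcal C^{hi}$; that is, every $\mathbf U(\infty)$-module in $\mathcal O$ lies in $\mathcal C^{hi}$.
   Context: $v$ indeterminate. $\mathbf U(\infty)$ is the $\mathbb Q(v)$-algebra with generators $E_i,F_i,K_i,K_i^{-1}$ ($i\in\mathbb Z$) and relations: $K_iK_j=K_jK_i$, $K_iK_i^{-1}=1$; $K_iE_j=v^{\delta_{i,j}-\delta_{i,j+1}}E_jK_i$; $K_iF_j=v^{\delta_{i,j+1}-\delta_{i,j}}F_jK_i$; $E_iE_j=E_jE_i$, $F_iF_j=F_jF_i$ if $|i-j|>1$; $E_iF_j-F_jE_i=\delta_{i,j}\frac{\widetilde K_i-\widetilde K_i^{-1}}{v-v^{-1}}$, $\widetilde K_i=K_iK_{i+1}^{-1}$; $E_i^2E_j-(v+v^{-1})E_iE_jE_i+E_jE_i^2=0$ and likewise for $F$ if $|i-j|=1$. $X(\infty)$ is the set of all integer sequences $\lambda=(\lambda_i)_{i\in\mathbb Z}$; $\alpha_i=\varepsilon_i-\varepsilon_{i+1}$ ($\varepsilon_i$ the unit sequence); $\mu\le_{wt}\lambda$ iff $\lambda-\mu$ is a finite $\mathbb N$-linear combination of the $\alpha_i$; $(-\infty,\lambda]=\{\mu:\mu\le_{wt}\lambda\}$. For a $\mathbf U(\infty)$-module $M$, $M_\lambda=\{x:K_ix=v^{\lambda_i}x\ \forall i\}$, $\mathrm{wt}(M)=\{\lambda:M_\lambda\ne0\}$; weight module: $M=\bigoplus_\lambda M_\lambda$. $\mathcal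 C^{hi}$: the full subcategory of weight modules $M$ such that for each $x\in M$ there is $n_0$ with $ux=0$ for every monomial $u$ in the $E_i$'s with at least $n_0$ factors. $\mathcal O$: the full subcategory of weight modules with finite-dimensional weight spaces for which there exist finitely many $\lambda^{(1)},\dots,\lambda^{(s)}\in X(\infty)$ with $\mathrm{wt}(M)\subseteq\bigcup_k(-\infty,\lambda^{(k)}]$. *)

(* Defs.v *)
From HB Require Import structures.
From mathcomp Require Import all_boot all_order all_algebra.
From Stdlib Require List.
Set Implicit Arguments. Unset Strict Implicit. Unset Printing Implicit Defensive.
Import Order.TTheory GRing.Theory Num.Theory.
Local Open Scope ring_scope.

Definition Qv : fieldType := {fraction {poly rat}}.
Definition qv : Qv := tofrac ('X : {poly rat}).

Definition kdelta (i j : int) : int := if i == j then 1 else 0.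

(* A U(infinity)-module: a Q(v)-vector space M together with Q(v)-linear
   operators E_i, F_i, K_i, K_i^{-1} (i in Z) satisfying the defining
   relations of U(infinity). *)
Definition lin_op (M : lmodType Qv) (f : M -> M) : Prop :=
  forall (a : Qv) (x y : M), f (a *: x + y) = a *: f x + f y.

Definition is_Uinf_module (M : lmodType Qv) (E F K Ki : int -> M -> M) : Prop :=
  (forall i, lin_op (E i) /\ lin_op (F i) /\ lin_op (K i) /\ lin_op (Ki i)) /\
      (forall i j x, K i (K j x) = K j (K i x)) /\
      (forall i x, K i (Ki i x) = x /\ Ki i (K i x) = x) /\
      (forall i j x, K i (E j x) = qv ^ (kdelta i j - kdelta i (j + 1)) *: E j (K i x)) /\
      (forall i j x, K i (F j x) = qv ^ (kdelta i (j + 1) - kdelta i j) *: F j (K i x)) /\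
      (forall i j x, (1 < absz (i - j))%N ->
         E i (E j x) = E j (E i x) /\ F i (F j x) = F j (F i x)) /\
      (forall i j x, E i (F j x) - F j (E i x) =
         if i == j then (qv - qv^-1)^-1 *: (K i (Ki (i + 1) x) - Ki i (K (i + 1) x))
         else 0) /\
    (forall i j x, absz (i - j) = 1%N ->
         E i (E i (E j x)) - (qv + qv^-1) *: E i (E j (E i x)) + E j (E i (E i x)) = 0
         /\ F i (F i (F j x)) - (qv + qv^-1) *: F i (F j (F i x)) + F j (F i (F i x)) = 0).

Definition weight := int -> int.

Definition alpha (i : int) : weight := fun j => kdelta j i - kdelta j (i + 1).

(* mu <=_wt lambda : lambda - mu is a finite N-linear combination of alpha_i
   (a finite list of indices, with repetitions). *)
Definition wt_le (mu lam : weight) : Prop :=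
  exists s : seq int, forall j, lam j - mu j = \sum_(i <- s) alpha i j.

Definition in_wspace (M : lmodType Qv) (K : int -> M -> M) (lam : weight) (x : M) : Prop :=
  forall i, K i x = qv ^ (lam i) *: x.

Definition in_wt (M : lmodType Qv) (K : int -> M -> M) (lam : weight) : Prop :=
  exists x : M, x != 0 /\ in_wspace K lam x.

(* weight module: M is the sum of its weight spaces (every element is a finite
   sum of weight vectors; the sum is automatically direct). *)
Definition weight_module (M : lmodType Qv) (K : int -> M -> M) : Prop :=
  forall x : M, exists s : seq (weight * M),
    List.Forall (fun p : weight * M => in_wspace K p.1 p.2) s /\ x = \sum_(p <- s) p.2.

Definition fin_dim_wspaces (M : lmodType Qv) (K : int -> M -> M) : Prop :=
  forall lam : weight, exists (n : nat) (b : 'I_n -> M),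
    (forall k, in_wspace K lam (b k)) /\
    (forall x, in_wspace K lam x -> exists c : 'I_n -> Qv, x = \sum_(k < n) c k *: b k).

Definition applyE (M : lmodType Qv) (E : int -> M -> M) (s : seq int) (x : M) : M :=
  foldr (fun i y => E i y) x s.

Definition in_Chi (M : lmodType Qv) (E K : int -> M -> M) : Prop :=
  weight_module K /\
  forall x : M, exists n0 : nat, forall s : seq int, (n0 <= size s)%N -> applyE E s x = 0.

Definition in_O (M : lmodType Qv) (K : int -> M -> M) : Prop :=
  [/\ weight_module K, fin_dim_wspaces K &
      exists ls : seq weight, forall lam, in_wt K lam ->
        List.Exists (fun l => wt_le lam l) ls].

(* Main.v *)
Require Import Defs.
From mathcomp Require Import all_boot all_order all_algebra zify ring.
From Stdlib Require Classical_Prop.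
Set Implicit Arguments. Unset Strict Implicit. Unset Printing Implicit Defensive.
Import Order.TTheory GRing.Theory Num.Theory.
Local Open Scope ring_scope.

Lemma kd_sum (r : seq int) (f : int -> int) i : uniq r -> i \in r ->
  \sum_(j <- r) f j * kdelta j i = f i.
Proof.
move=> ur ir; rewrite (bigD1_seq i) //= /kdelta eqxx mulr1 big1 ?addr0 //.
by move=> j /negPf ->; rewrite mulr0.
Qed.

Lemma ht_sum (r s : seq int) : uniq r -> (forall i, i \in s -> (i \in r) && (i + 1 \in r)) ->
  \sum_(j <- r) (- j) * (\sum_(i <- s) alpha i j) = (size s)%:R.
Proof.
move=> ur; elim: s => [|i s IH] H.
  by rewrite big1 // => j _; rewrite big_nil mulr0.
have /andP [h1 h2] := H i (mem_head _ _).
have -> : \sum_(j <- r) (- j) * (\sum_(k <- (i :: s)) alpha k j) =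
  \sum_(j <- r) (- j) * kdelta j i - \sum_(j <- r) (- j) * kdelta j (i+1)
  + \sum_(j <- r) (- j) * (\sum_(k <- s) alpha k j).
  rewrite -sumrB -big_split /=; apply: eq_bigr => j _.
  by rewrite big_cons /alpha mulrDr mulrBr.
rewrite (kd_sum (fun j => - j)) // (kd_sum (fun j => - j)) // IH.
  by rewrite /= -add1n natrD; congr (_ + _); lia.
by move=> k ks; apply: H; rewrite in_cons ks orbT.
Qed.

Lemma ht_eq (s t : seq int) : (forall j, \sum_(i <- s) alpha i j = \sum_(i <- t) alpha i j) ->
  size s = size t.
Proof.
move=> H.
pose r := undup (s ++ t ++ map (fun i => i + 1) (s ++ t)).
have ur : uniq r by apply: undup_uniq.
have Hs : forall u : seq int, (forall i, i \in u -> i \in s ++ t) -> forall i, i \in u -> (i \in r) && (i + 1 \in r).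
  move=> u Hu i iu; rewrite !mem_undup !mem_cat.
  have := Hu i iu; rewrite mem_cat => hh; apply/andP; split.
    by case/orP: hh => ->; rewrite ?orbT.
  by rewrite (map_f (fun i => i + 1) (Hu i iu)) !orbT.
have e1 := ht_sum ur (Hs s (fun i h => ltac:(by rewrite mem_cat h))).
have e2 := ht_sum ur (Hs t (fun i h => ltac:(by rewrite mem_cat h orbT))).
have : ((size s)%:R : int) = (size t)%:R.
  by rewrite -e1 -e2; apply: eq_bigr => j _; rewrite H.
by move/eqP; rewrite eqr_nat => /eqP.
Qed.

Lemma lin0 (M : lmodType Qv) (f : M -> M) : lin_op f -> f 0 = 0.
Proof. move=> H; have := H 1 0 0; rewrite !scale1r addr0 => e; apply: (addrI (f 0)); by rewrite addr0 -e. Qed.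

Lemma linZ (M : lmodType Qv) (f : M -> M) a x : lin_op f -> f (a *: x) = a *: f x.
Proof. by move=> H; have := H a x 0; rewrite !addr0 (lin0 H) addr0. Qed.

Lemma linD (M : lmodType Qv) (f : M -> M) x y : lin_op f -> f (x + y) = f x + f y.
Proof. by move=> H; have := H 1 x y; rewrite !scale1r => ->. Qed.

Lemma qv_unit : qv \is a GRing.unit.
Proof. by rewrite unitfE /qv tofrac_eq0 polyX_eq0. Qed.

Lemma applyE_weight (M : lmodType Qv) (E K : int -> M -> M) (mu : weight) y s :
  (forall i, lin_op (E i)) ->
  (forall i j x, K i (E j x) = qv ^ (kdelta i j - kdelta i (j + 1)) *: E j (K i x)) ->
  in_wspace K mu y ->
  in_wspace K (fun j => mu j + \sum_(i <- s) alpha i j) (applyE E s y).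
Proof.
move=> lE KE Hy; elim: s => [|i s IH] j /=.
  by rewrite big_nil addr0; apply: Hy.
rewrite KE IH linZ // scalerA -exprzDr ?qv_unit // big_cons /alpha.
by congr (_ ^ _ *: _); ring.
Qed.

Lemma applyE_sum (M : lmodType Qv) (E : int -> M -> M) s (r : seq (weight * M)) :
  (forall i, lin_op (E i)) ->
  applyE E s (\sum_(p <- r) p.2) = \sum_(p <- r) applyE E s p.2.
Proof.
move=> lE.
have h0 : forall s, applyE E s 0 = 0 by elim=> //= i s' ->; rewrite lin0.
have hD : forall s a b, applyE E s (a + b) = applyE E s a + applyE E s b.
  by elim=> //= i s' IH a b; rewrite IH linD.
elim: r => [|p r IH]; first by rewrite !big_nil h0.
by rewrite !big_cons hD IH.
Qed.

Lemma bound_lemma (ls : seq weight) (mu : weight) : exists N : nat,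
  forall l s, List.In l ls -> wt_le (fun j => mu j + \sum_(i <- s) alpha i j) l -> (size s <= N)%N.
Proof.
elim: ls => [|l ls [N IH]]; first by exists 0%N.
case: (Classical_Prop.classic (wt_le mu l)) => [[t Ht]|Hn].
  exists (maxn N (size t)) => l' s [<-|Hl] [u Hu].
    have : size (s ++ u) = size t.
      apply: ht_eq => j; rewrite big_cat -Ht; have := Hu j; move=> e.
      simpl in e; rewrite -e /=; ring.
    by rewrite size_cat => <-; rewrite leq_max leq_addr orbT.
  by rewrite leq_max (IH l' s Hl) //; exists u.
exists N => l' s [<-|Hl] Hw; last by apply: IH Hl Hw.
case: Hn; case: Hw => u Hu; exists (s ++ u) => j.
by rewrite big_cat /= -Hu /=; ring.
Qed.

Theorem proposition9p2 (M : lmodType Qv) (E F K Ki : int -> M -> M) :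
  is_Uinf_module E F K Ki -> in_O K -> in_Chi E K.
Proof.
move=> [lin [_ [_ [KE _]]]] [wm _ [ls Hls]].
have lE : forall i, lin_op (E i) by move=> i; case: (lin i).
split=> // x.
have [r [Hr ->]] := wm x.
have : exists N : nat, forall p s, List.In p r -> (N <= size s)%N -> applyE E s p.2 = 0.
  elim: r Hr => [|p r IH] Hr; first by exists 0%N.
  inversion Hr as [|? ? Hp Hr']; subst.
  have [N1 HN1] := IH Hr'.
  have [N2 HN2] := bound_lemma ls p.1.
  exists (maxn N1 N2.+1) => p' s [<-|Hin] hs; last first.
    by apply: HN1 => //; apply: leq_trans hs; rewrite leq_maxl.
  case: (eqVneq (applyE E s p.2) 0) => // nz.
  have Hw := applyE_weight s lE KE Hp.
  have := Hls _ (ex_intro _ _ (conj nz Hw)).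
  move/List.Exists_exists => [l [Hl Hle]].
  have := HN2 l s Hl Hle.
  have : (N2.+1 <= size s)%N by apply: leq_trans hs; rewrite leq_maxr.
  by move=> a b; have := leq_trans a b; rewrite ltnn.
move=> [N HN]; exists N => s hs.
rewrite applyE_sum //.
elim: r HN {Hr} => [|p r IH] HN; first by rewrite big_nil.
rewrite big_cons (HN p s (or_introl erefl) hs) add0r.
by apply: IH => p' s' h; apply: HN; right.
Qed.
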